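(* Let $n,m\ge 1$, $V_{th}>0$, $\Delta t_d>0$, $\mathbf{W}\in\mathbb{R}^{n\times n}$, $\mathbf{F}\in\mathbb{R}^{n\times m}$, $\mathbf{b}\in\mathbb{R}^n$. Consider a feedback spiking neural network of $n$ neurons with the continuous integrate-and-fire (IF) model, whose membrane potentials $\mathbf{u}(t)\in\mathbb{R}^n$ evolve as $$\frac{\mathrm{d}\mathbf{u}}{\mathrm{d}t}=\mathbf{W}\mathbf{s}(t-\Delta t_d)+\mathbf{F}\mathbf{x}(t)+\mathbf{b}-V_{th}\mathbf{s}(t),$$ where $\mathbf{x}(t)\in\mathbb{R}^m$ is the input and $\mathbf{s}(t)$ is the vector of output spike trains (sums of Dirac deltas at the times a neuron's potential reaches $V_{th}$, after which it is reduced by $V_{th}$). Let $\mathbf{a}(t)=\frac1t\int_0^t\mathbf{s}(\tau)\,\mathrm{d}\tau$ be the average firing rates and $\overline{\mathbf{x}}(t)=\frac1t\int_0^t\mathbf{x}(\tau)\,\mathrm{d}\tau$ the average inputs. Let $\mathbf{u}^+(t)\in\mathbb{R}^n$ denote the (positive) part of the membrane potential for which $$\mathbf{a}(t)=\mathrm{ReLU}\!\left(\frac{1}{V_{th}}\left(\frac{t-\Delta t_d}{t}\mathbf{W}\mathbf{a}(t-\Delta t_d)+\mathbf{F}\overline{\mathbf{x}}(t)+\mathbf{b}-\frac{\mathbf{u}^+(t)}{t}\right)\right)$$ holds. Suppose that $\overline{\mathbf{x}}(t)\to\mathbf{x}^*$ as $t\to\infty$, and that there exist constants $c$ and $\gamma<1$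 such that $|\mathbf{u}^+_i(t)|\le c$ for all $i,t$ and $\|\mathbf{W}\|_2\le\gamma V_{th}$. Then $\mathbf{a}(t)$ converges as $t\to\infty$ to a point $\mathbf{a}^*$ satisfying $$\mathbf{a}^*=\mathrm{ReLU}\!\left(\frac{1}{V_{th}}\left(\mathbf{W}\mathbf{a}^*+\mathbf{F}\mathbf{x}^*+\mathbf{b}\right)\right).$$
   Context: $\mathrm{ReLU}(x)=\max(x,0)$ applied elementwise; $\|\cdot\|_2$ is the spectral (operator 2-) norm. In the paper the membrane potential is decomposed as $\mathbf{u}_i(t)=\mathbf{u}^-_i(t)+\mathbf{u}^+_i(t)$, where $\frac1t\mathbf{u}^-_i(t)=\min(v_i(t),0)$ with $v(t)=\frac{t-\Delta t_d}{t}\mathbf{W}\mathbf{a}(t-\Delta t_d)+\mathbf{F}\overline{\mathbf{x}}(t)+\mathbf{b}$ is the accumulated negative term, and $\mathbf{u}^+(t)$ is the remainder; with this decomposition the displayed ReLU relation for $\mathbf{a}(t)$ holds. *)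

(* Defs.v *)
From HB Require Import structures.
From mathcomp Require Import all_boot all_order all_algebra.
From mathcomp Require Import all_classical all_reals all_analysis.
Set Implicit Arguments. Unset Strict Implicit. Unset Printing Implicit Defensive.
Import Order.TTheory GRing.Theory Num.Theory.
Import numFieldNormedType.Exports.
Local Open Scope classical_set_scope.
Local Open Scope ring_scope.

Section Defs.
Variable R : realType.

Definition relu_mx (k l : nat) (v : 'M[R]_(k, l)) : 'M[R]_(k, l) :=
  map_mx (fun r => Num.max r 0) v.

Definition vnorm2 (k : nat) (v : 'cV[R]_k) : R :=
  Num.sqrt (\sum_(i < k) (v i 0) ^+ 2).

Definition opnorm2 (k l : nat) (W : 'M[R]_(k, l)) : R :=
  sup [set vnorm2 (W *m v) / vnorm2 v | v in [set v : 'cV[R]_l | v != 0]].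

(* average firing rates a(t) = (1/t) \int_0^t s = N(t)/t, where N i t is the
   number of spikes emitted by neuron i up to time t *)
Definition rate (k : nat) (N : 'I_k -> R -> nat) (t : R) : 'cV[R]_k :=
  \col_i ((N i t)%:R / t).

Definition avg_input (k : nat) (x : R -> 'cV[R]_k) (t : R) : 'cV[R]_k :=
  \col_j (t^-1 * \int[@lebesgue_measure R]_(tau in `[0, t]) x tau j 0).

End Defs.

(* Main.v *)
Require Import Defs.
From HB Require Import structures.
From mathcomp Require Import all_boot all_order all_algebra.
From mathcomp Require Import all_classical all_reals all_analysis.
From mathcomp Require Import ring lra.
Import Order.TTheory GRing.Theory Num.Theory.
Import numFieldNormedType.Exports.
Local Open Scope classical_set_scope.
Local Open Scope ring_scope.

Set Implicit Arguments. Unset Strict Implicit. Unset Printing Implicit Defensive.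
Section Aux.
Variable R : realType.

Lemma entry_le (k l : nat) (v : 'M[R]_(k,l)) i j : `|v i j| <= `|v|.
Proof. have -> : `|v| = mx_norm v by []. rewrite mx_normrE. exact: (le_bigmax _ _ (i,j)). Qed.

Lemma vnorm2_ge0 k (v : 'cV[R]_k) : 0 <= vnorm2 v.
Proof. exact: sqrtr_ge0. Qed.

Lemma sumsq_ge0 k (f : 'I_k -> R) : 0 <= \sum_i f i ^+ 2.
Proof. by apply: sumr_ge0 => i _; exact: sqr_ge0. Qed.

Lemma vnorm2_entry k (v : 'cV[R]_k) i : `|v i 0| <= vnorm2 v.
Proof.
rewrite /vnorm2 -sqrtr_sqr ler_sqrt; last exact: sumsq_ge0.
rewrite (bigD1 i) //= lerDl; apply: sumr_ge0 => j _; exact: sqr_ge0.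
Qed.

Lemma vnorm2_le_sum k (v : 'cV[R]_k) : vnorm2 v <= \sum_i `|v i 0|.
Proof.
have S0 : 0 <= \sum_i `|v i 0| by apply: sumr_ge0.
apply: (@le_trans _ _ (Num.sqrt ((\sum_i `|v i 0|) ^+ 2))); last first.
  by rewrite sqrtr_sqr ger0_norm.
rewrite /vnorm2 ler_sqrt; last exact: sqr_ge0.
rewrite expr2 mulr_sumr; apply: ler_sum => i _.
rewrite -[v i 0 ^+ 2]ger0_norm ?sqr_ge0 // normrX expr2 ler_wpM2r //.
by rewrite (bigD1 i) //= lerDl; apply: sumr_ge0.
Qed.

Lemma vnorm2_le_mx k (v : 'cV[R]_k) : vnorm2 v <= k%:R * `|v|.
Proof.
apply: le_trans (vnorm2_le_sum v) _.
rewrite -[k in k%:R]card_ord mulr_natl -sumr_const; apply: ler_sum => i _; exact: entry_le.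
Qed.

Lemma vnorm2_0 k : vnorm2 (0 : 'cV[R]_k) = 0.
Proof. rewrite /vnorm2 big1 ?sqrtr0 // => i _; by rewrite mxE expr0n. Qed.

Lemma vnorm2_eq0 k (v : 'cV[R]_k) : vnorm2 v = 0 -> v = 0.
Proof.
move=> /eqP; rewrite /vnorm2 sqrtr_eq0 => H.
have H0 : \sum_i v i 0 ^+ 2 = 0 by apply/eqP; rewrite eq_le H sumsq_ge0.
apply/matrixP => i j; rewrite ord1 mxE.
have := psumr_eq0P (fun i _ => sqr_ge0 (v i 0)) H0 (erefl true : true) .
by move=> /(_ i) /eqP; rewrite sqrf_eq0 => /eqP.
Qed.

Lemma vnorm2Z k a (v : 'cV[R]_k) : vnorm2 (a *: v) = `|a| * vnorm2 v.
Proof.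
rewrite /vnorm2 -sqrtr_sqr -sqrtrM ?sqr_ge0 // mulr_sumr.
by congr Num.sqrt; apply: eq_bigr => i _; rewrite mxE exprMn.
Qed.

Lemma vnorm2N k (v : 'cV[R]_k) : vnorm2 (- v) = vnorm2 v.
Proof. by rewrite -scaleN1r vnorm2Z normrN normr1 mul1r. Qed.

Lemma vnorm2B k (u v : 'cV[R]_k) : vnorm2 (u - v) = vnorm2 (v - u).
Proof. by rewrite -vnorm2N opprB. Qed.

Lemma CS k (f g : 'I_k -> R) :
  (\sum_i f i * g i) ^+ 2 <= (\sum_i f i ^+ 2) * (\sum_i g i ^+ 2).
Proof.
set A := \sum_i f i ^+ 2; set B := \sum_i g i ^+ 2; set C := \sum_i f i * g i.
have B0 : 0 <= B by exact: sumsq_ge0.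
have [Bz|Bp] := eqVneq B 0.
  have gz : forall i, g i = 0.
    move=> i; have := psumr_eq0P (fun i _ => sqr_ge0 (g i)) Bz (erefl true).
    by move=> /(_ i) /eqP; rewrite sqrf_eq0 => /eqP.
  rewrite /C big1 ?expr0n ?Bz ?mulr0 // => i _; by rewrite gz mulr0.
have Bpos : 0 < B by rewrite lt_def Bp B0.
have H : 0 <= \sum_i (B * f i - C * g i) ^+ 2 by exact: sumsq_ge0.
have E : \sum_i (B * f i - C * g i) ^+ 2 = B * (A * B - C ^+ 2).
  have step : forall i, (B * f i - C * g i) ^+ 2 =
     B ^+ 2 * f i ^+ 2 + (- (2%:R * B * C)) * (f i * g i) + C ^+ 2 * g i ^+ 2.
    by move=> i; ring.
  rewrite (eq_bigr _ (fun i _ => step i)) !big_split /= -!mulr_sumr -/A -/B -/C.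
  ring.
rewrite E in H.
move: H; rewrite pmulr_rge0 // subr_ge0 mulrC //.
Qed.

Lemma vnorm2D k (u v : 'cV[R]_k) : vnorm2 (u + v) <= vnorm2 u + vnorm2 v.
Proof.
set A := \sum_i u i 0 ^+ 2; set B := \sum_i v i 0 ^+ 2;
set C := \sum_i u i 0 * v i 0.
have A0 : 0 <= A by exact: sumsq_ge0.
have B0 : 0 <= B by exact: sumsq_ge0.
have HC : C <= Num.sqrt A * Num.sqrt B.
  rewrite -sqrtrM // (le_trans (ler_norm C)) // -sqrtr_sqr ler_sqrt;
    last by apply: mulr_ge0.
  exact: CS.
have S0 : 0 <= vnorm2 u + vnorm2 v by apply: addr_ge0; apply: vnorm2_ge0.
apply: (@le_trans _ _ (Num.sqrt ((vnorm2 u + vnorm2 v) ^+ 2))); last first.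
  by rewrite sqrtr_sqr ger0_norm.
rewrite /vnorm2 ler_sqrt; last exact: sqr_ge0.
have step : forall i, (u + v) i 0 ^+ 2 = u i 0 ^+ 2 + 2%:R * (u i 0 * v i 0) + v i 0 ^+ 2.
  by move=> i; rewrite mxE; ring.
rewrite (eq_bigr _ (fun i _ => step i)) !big_split /= -!mulr_sumr -/A -/B -/C.
rewrite sqrrD !sqr_sqrtr //.
have : 2%:R * C <= 2%:R * (Num.sqrt A * Num.sqrt B) by rewrite ler_pM2l.
lra.
Qed.

Lemma vnorm2DB k (u v : 'cV[R]_k) : vnorm2 (u - v) <= vnorm2 u + vnorm2 v.
Proof. by rewrite -(vnorm2N v); exact: vnorm2D. Qed.

Lemma relu_lip k (u v : 'cV[R]_k) :
  vnorm2 (relu_mx u - relu_mx v) <= vnorm2 (u - v).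
Proof.
rewrite /vnorm2 ler_sqrt; last exact: sumsq_ge0.
apply: ler_sum => i _; rewrite !mxE.
move: (u i 0) (v i 0) => x y.
case: (leP x 0) => hx; case: (leP y 0) => hy.
- rewrite subrr expr0n /=; exact: sqr_ge0.
- have h : 0 <= (-x) * (2 * y - x) by apply: mulr_ge0; lra.
  nra.
- have h : 0 <= x * (x - 2 * y) by apply: mulr_ge0; lra.
  nra.
- by [].
Qed.

Definition Kmx (k l : nat) (W : 'M[R]_(k, l)) := \sum_i \sum_j `|W i j|.

Lemma Kmx_ge0 k l (W : 'M[R]_(k, l)) : 0 <= Kmx W.
Proof. by apply: sumr_ge0 => i _; apply: sumr_ge0. Qed.

Lemma normW_bound k l (W : 'M[R]_(k, l)) (v : 'cV[R]_l) :
  vnorm2 (W *m v) <= Kmx W * vnorm2 v.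
Proof.
apply: le_trans (vnorm2_le_sum _) _.
rewrite /Kmx mulr_suml; apply: ler_sum => i _; rewrite mxE.
apply: le_trans (ler_norm_sum _ _ _) _.
rewrite mulr_suml; apply: ler_sum => j _; rewrite normrM ler_wpM2l //.
exact: vnorm2_entry.
Qed.

Lemma opnorm2_bound k (W : 'M[R]_k) (v : 'cV[R]_k) :
  vnorm2 (W *m v) <= opnorm2 W * vnorm2 v.
Proof.
have [->|vn0] := eqVneq v 0; first by rewrite mulmx0 vnorm2_0 mulr0.
have vp : 0 < vnorm2 v.
  rewrite lt_def vnorm2_ge0 andbT; apply/eqP => /vnorm2_eq0 h; by rewrite h eqxx in vn0.
rewrite -ler_pdivrMr //.
apply: ub_le_sup.
  exists (Kmx W) => _ [w /= wn0 <-].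
  have wp : 0 < vnorm2 w.
    rewrite lt_def vnorm2_ge0 andbT; apply/eqP => /vnorm2_eq0 h; by rewrite h eqxx in wn0.
  by rewrite ler_pdivrMr //; apply: normW_bound.
by exists v.
Qed.

Lemma decay (e : R -> R) (g dt S M E : R) : 0 <= g -> g < 1 -> 0 < dt ->
  0 <= E -> 0 <= M ->
  (forall t, S + dt <= t -> e t <= g * e (t - dt) + E) ->
  (forall t, S <= t -> t <= S + dt -> e t <= M) ->
  forall k : nat, forall t, S + k%:R * dt <= t ->
    e t <= g ^+ k * (M + E / (1 - g)) + E / (1 - g).
Proof.
move=> g0 g1 dt0 E0 M0 rec bnd.
have g1' : 0 < 1 - g by rewrite subr_gt0.
have Eg0 : 0 <= E / (1 - g) by rewrite divr_ge0 // ltW.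
set B := M + E / (1 - g).
have key : g * B + E <= B.
  have -> : g * B + E = g * M + E / (1 - g) by rewrite /B; field; lra.
  rewrite /B lerD2r; nra.
have Q : forall k : nat, forall t, S <= t -> t <= S + k.+1%:R * dt -> e t <= B.
  elim=> [|k IH] t h1 h2.
    by rewrite /B (le_trans (bnd _ h1 _)) ?lerDl // -[dt]mul1r.
  have [h3|h3] := leP t (S + dt).
    by rewrite /B (le_trans (bnd _ h1 h3)) ?lerDl.
  apply: le_trans (rec t (ltW h3)) _; apply: le_trans _ key.
  rewrite lerD2r ler_wpM2l //; apply: IH; first lra.
  move: h2; rewrite -[k.+2]addn1 -[k.+1]addn1 natrD; lra.
have Bd : forall t, S <= t -> e t <= B.
  move=> t h1.
  have h0 : 0 <= (t - S) / dt by rewrite divr_ge0 ?subr_ge0 // ltW.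
  have := archi_boundP h0; set K := Num.Def.archi_bound _ => hK.
  apply: (Q K) => //.
  rewrite ltr_pdivrMr // in hK.
  rewrite -[K.+1]addn1 natrD; nra.
elim=> [|k IH] t h.
  rewrite expr0 mul1r; apply: le_trans (Bd t _) _; first lra.
  by rewrite lerDl.
have h' : S + dt <= t.
  move: h; rewrite -[k.+1]addn1 natrD.
  have : 0 <= k%:R * dt by apply: mulr_ge0 => //; exact: ltW.
  lra.
apply: le_trans (rec t h') _.
have -> : g ^+ k.+1 * B + E / (1 - g) = g * (g ^+ k * B + E / (1 - g)) + E.
  rewrite exprS; field; lra.
rewrite lerD2r ler_wpM2l //; apply: IH.
move: h; rewrite -[k.+1]addn1 natrD; lra.
Qed.

Lemma norm_le_vnorm2 k (w : 'cV[R]_k) : `|w| <= vnorm2 w.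
Proof.
have -> : `|w| = mx_norm w by [].
rewrite mx_normrE; apply: bigmax_le; first exact: vnorm2_ge0.
by move=> [i j] _ /=; rewrite ord1; exact: vnorm2_entry.
Qed.

Lemma fixed_point k (T : 'cV[R]_k -> 'cV[R]_k) g : 0 <= g -> g < 1 ->
  (forall u v, vnorm2 (T u - T v) <= g * vnorm2 (u - v)) -> exists a, T a = a.
Proof.
move=> g0 g1 ctr.
pose v j := iter j T 0.
set C := vnorm2 (T 0).
have g1' : 0 < 1 - g by rewrite subr_gt0.
have C0 : 0 <= C by exact: vnorm2_ge0.
set B := C / (1 - g).
have B0 : 0 <= B by rewrite divr_ge0 // ltW.
have bnd : forall p, vnorm2 (v p) <= B.
  elim=> [|p IH]; first by rewrite /v /= vnorm2_0.
  have -> : v p.+1 = (T (v p) - T 0) + T 0 by rewrite subrK.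
  apply: le_trans (vnorm2D _ _) _.
  apply: le_trans (lerD (ctr _ _) (lexx C)) _.
  rewrite subr0.
  have : g * vnorm2 (v p) <= g * B by rewrite ler_wpM2l.
  have hB : g * B + C = B by rewrite /B; field; lra.
  lra.
have dist : forall q p, vnorm2 (v (q + p)%N - v q) <= g ^+ q * B.
  elim=> [|q IH] p; first by rewrite add0n (_ : v 0%N = 0) // subr0 expr0 mul1r; exact: bnd.
  rewrite addSn.
  apply: le_trans (ctr _ _) _.
  by rewrite exprS -mulrA ler_wpM2l.
have cv : cvgn v.
  apply/cauchy_cvgP; apply: cauchy_exP => eps eps0.
  have d0 : 0 < eps / (B + 1) by rewrite divr_gt0 // ltr_wpDl.
  have : `|g| < 1 by rewrite ger0_norm.
  move=> /cvg_expr /cvgrPdist_lt /(_ _ d0) [q _ Hq].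
  exists (v q); exists q => // j /= hj.
  rewrite -ball_normE /=.
  have := Hq q (leqnn q); rewrite sub0r normrN ger0_norm ?exprn_ge0 // => hq.
  rewrite -(subnKC hj).
  apply: le_lt_trans (norm_le_vnorm2 _) _.
  rewrite vnorm2B; apply: le_lt_trans (dist _ _) _.
  rewrite ltr_pdivlMr ?ltr_wpDl // in hq.
  apply: le_lt_trans hq.
  rewrite ler_wpM2l ?exprn_ge0 // lerDl //.
set L := lim (v @ \oo).
exists L.
apply/eqP; rewrite -subr_eq0; apply/eqP; apply: vnorm2_eq0.
apply/eqP; rewrite eq_le vnorm2_ge0 andbT; apply/negP => /negP; rewrite -ltNge => dp.
set d := vnorm2 (T L - L) in dp *.
have d0 : 0 < d / (4 * k%:R + 4) by rewrite divr_gt0 // ltr_wpDl // mulr_ge0.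
have := cv; move=> /cvgrPdist_lt /(_ _ d0) [N _ HN].
have h1 := HN N (leqnn N).
have h2 := HN N.+1 (leqnSn N).
have e1 : vnorm2 (L - v N) <= k%:R * `|L - v N| by exact: vnorm2_le_mx.
have e2 : vnorm2 (L - v N.+1) <= k%:R * `|L - v N.+1| by exact: vnorm2_le_mx.
have eq : T L - L = (T L - T (v N)) - (L - v N.+1).
  by rewrite opprB addrA subrK.
have e3 := ctr L (v N).
have e4 := vnorm2DB (T L - T (v N)) (L - v N.+1).
rewrite -eq -/d in e4.
have k0 : 0 <= k%:R :> R by [].
have f : forall a : R, 0 <= a -> a < d / (4 * k%:R + 4) -> k%:R * a <= d / 4.
  move=> a a0 ha.
  apply: le_trans (_ : (k%:R + 1) * a <= _).
    by rewrite mulrDl mul1r lerDl.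
  apply: le_trans (_ : (k%:R + 1) * (d / (4 * k%:R + 4)) <= _).
    by rewrite ler_wpM2l ?ltW // ?addr_ge0.
  rewrite le_eqVlt; apply/orP; left; apply/eqP; field.
  have : 0 < k%:R + 1 :> R by rewrite ltr_wpDl.
  lra.
have f1 := f _ (normr_ge0 _) h1.
have f2 := f _ (normr_ge0 _) h2.
have g2 : g * vnorm2 (L - v N) <= vnorm2 (L - v N).
  by rewrite ler_piMl ?vnorm2_ge0 // ltW.
lra.
Qed.

Lemma cV_ident k (A B c d : 'cV[R]_k) : A + c + d - (B + c + d) = A - B.
Proof. by apply/matrixP=> i j; rewrite !mxE; ring. Qed.

Lemma ident k (V s q : R) (Wa' Wa Fx Fs bb U : 'cV[R]_k) : s != 0 ->
 V *: (((s - q)/s) *: Wa' + Fx + bb - s^-1 *: U) - V *: (Wa + Fs + bb)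
 = V *: ((((s - q)/s) *: (Wa' - Wa) - (q/s) *: Wa) + ((Fx - Fs) - s^-1 *: U)).
Proof. by move=> s0; apply/matrixP => i j; rewrite !mxE; field. Qed.

End Aux.

Unset Implicit Arguments.
Set Strict Implicit.

Theorem theorem1 (R : realType) (n m : nat) (hn : (0 < n)%N) (hm : (0 < m)%N)
  (Vth dt : R) (hV : 0 < Vth) (hdt : 0 < dt)
  (W : 'M[R]_n) (F : 'M[R]_(n, m)) (b : 'cV[R]_n)
  (x : R -> 'cV[R]_m) (N : 'I_n -> R -> nat) (up : R -> 'cV[R]_n)
  (xstar : 'cV[R]_m) (c gamma : R)
  (hx_int : forall t, 0 < t -> forall j,
      (@lebesgue_measure R).-integrable `[0, t] (fun tau => (x tau j 0)%:E))
  (hN0 : forall i t, t <= 0 -> N i t = 0%N)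
  (hNmono : forall i s t, s <= t -> (N i s <= N i t)%N)
  (hrel : forall t, 0 < t ->
      rate N t = relu_mx (Vth^-1 *: (((t - dt) / t) *: (W *m rate N (t - dt))
                                      + F *m avg_input x t + b - t^-1 *: up t)))
  (hxbar : avg_input x t @[t --> +oo] --> xstar)
  (hup : forall i t, 0 < t -> `|up t i 0| <= c)
  (hgamma : gamma < 1) (hW : opnorm2 W <= gamma * Vth) :
  exists astar : 'cV[R]_n,
    rate N t @[t --> +oo] --> astar /\
    astar = relu_mx (Vth^-1 *: (W *m astar + F *m xstar + b)).
Proof.
set g := Num.max (opnorm2 W / Vth) 0.
have g0 : 0 <= g by rewrite le_max lexx orbT.
have g1 : g < 1.
  rewrite gt_max ltr01 andbT ltr_pdivrMr // mul1r.
  apply: le_lt_trans hW _; nra.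
have Lw : forall v, vnorm2 (W *m v) <= g * Vth * vnorm2 v.
  move=> v; apply: le_trans (opnorm2_bound W v) _.
  rewrite ler_wpM2r ?vnorm2_ge0 // -ler_pdivrMr // le_max lexx //.
set T := fun v => relu_mx (Vth^-1 *: (W *m v + F *m xstar + b)).
have ctr : forall u v, vnorm2 (T u - T v) <= g * vnorm2 (u - v).
  move=> u v; rewrite /T; have h := relu_lip (Vth^-1 *: (W *m u + F *m xstar + b)) (Vth^-1 *: (W *m v + F *m xstar + b)). refine (le_trans h _).
  rewrite -scalerBr cV_ident -mulmxBr vnorm2Z ger0_norm; last by rewrite invr_ge0 ltW.
  apply: le_trans (ler_wpM2l _ (Lw _)) _; first by rewrite invr_ge0 ltW.
  rewrite le_eqVlt; apply/orP; left; apply/eqP; field; lra.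
have [astar Hfix] := fixed_point g0 g1 ctr.
exists astar; split; last by rewrite -{1}Hfix.
set a := rate N.
set e := fun t => vnorm2 (a t - astar).
set KF := Kmx F.
set A1 := vnorm2 (W *m astar).
have c0 : 0 <= c := le_trans (normr_ge0 _) (hup (Ordinal hn) 1 ltr01).
set P := dt * A1 + n%:R * c.
set eps := fun t => Vth^-1 * (P / t + KF * vnorm2 (avg_input x t - xstar)).
have Vi0 : 0 <= Vth^-1 by rewrite invr_ge0 ltW.
have rec : forall t, dt <= t -> e t <= g * e (t - dt) + eps t.
  move=> t ht.
  have t0 : 0 < t by apply: lt_le_trans hdt ht.
  have tn0 : t != 0 by rewrite gt_eqF.
  have E1 : vnorm2 (a t - astar) = vnorm2 (a t - T astar) by rewrite Hfix.
  rewrite /e E1 /a (hrel t t0) /T.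
  apply: le_trans (relu_lip _ _) _.
  rewrite (ident _ _ _ _ _ _ _ _ tn0) -!mulmxBr vnorm2Z ger0_norm //.
  set P1 := ((t - dt) / t) *: (W *m (rate N (t - dt) - astar)).
  set P2 := (dt / t) *: (W *m astar).
  set P3 := F *m (avg_input x t - xstar).
  set P4 := t^-1 *: up t.
  have h1 := vnorm2D (P1 - P2) (P3 - P4).
  have h2 := vnorm2DB P1 P2.
  have h3 := vnorm2DB P3 P4.
  have hP1 : vnorm2 P1 <= g * Vth * vnorm2 (rate N (t - dt) - astar).
    rewrite /P1 vnorm2Z.
    have q1 : `|(t - dt) / t| <= 1.
      rewrite ger0_norm ?divr_ge0 ?subr_ge0 ?(ltW t0) //.
      by rewrite ler_pdivrMr // mul1r lerBlDr lerDl ltW.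
    apply: le_trans (_ : 1 * vnorm2 (W *m (rate N (t - dt) - astar)) <= _).
      by rewrite ler_wpM2r ?vnorm2_ge0.
    by rewrite mul1r.
  have hP2 : vnorm2 P2 = dt / t * A1.
    by rewrite /P2 vnorm2Z ger0_norm // divr_ge0 // ltW.
  have hP3 : vnorm2 P3 <= KF * vnorm2 (avg_input x t - xstar) by exact: normW_bound.
  have hP4 : vnorm2 P4 <= t^-1 * (n%:R * c).
    rewrite /P4 vnorm2Z ger0_norm ?invr_ge0 ?(ltW t0) // ler_wpM2l ?invr_ge0 ?(ltW t0) //.
    apply: le_trans (vnorm2_le_sum _) _.
    rewrite -[n in n%:R]card_ord mulr_natl -sumr_const; apply: ler_sum => i _; exact: hup.
  have hPt : P / t = dt / t * A1 + t^-1 * (n%:R * c) by rewrite /P; field.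
  have B1 : vnorm2 (P1 - P2 + (P3 - P4)) <=
      g * Vth * vnorm2 (rate N (t - dt) - astar) + (P / t + KF * vnorm2 (avg_input x t - xstar)).
    rewrite hPt; lra.
  apply: le_trans (ler_wpM2l Vi0 B1) _.
  rewrite /eps le_eqVlt; apply/orP; left; apply/eqP; field; lra.
have evb : forall eta, 0 < eta -> exists S0, dt <= S0 /\ forall t, S0 <= t -> eps t <= eta.
  move=> eta eta0.
  set Q := KF * m%:R.
  have Q0 : 0 <= Q by rewrite mulr_ge0 ?Kmx_ge0.
  set del := eta * Vth / (2 * (Q + 1)).
  have del0 : 0 < del by rewrite divr_gt0 ?mulr_gt0 // ltr_wpDl.
  move/cvgrPdist_lt: hxbar => /(_ del del0) [M0 [M0r HM0]].
  have P0 : 0 <= P by rewrite addr_ge0 ?mulr_ge0 ?vnorm2_ge0 // ltW.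
  set M1 := 2 * P / (eta * Vth).
  exists (Num.max (M0 + 1) (Num.max M1 dt)); split.
    by rewrite le_max; apply/orP; right; rewrite le_max lexx orbT.
  move=> t; rewrite !ge_max => /andP[h1 /andP[h2 h3]].
  have t0 : 0 < t by apply: lt_le_trans hdt h3.
  have hMt : M0 < t by lra.
  have hx := HM0 t hMt.
  have hD : vnorm2 (avg_input x t - xstar) <= m%:R * `|xstar - avg_input x t|.
    by rewrite vnorm2B; exact: vnorm2_le_mx.
  have hK : KF * vnorm2 (avg_input x t - xstar) <= eta * Vth / 2.
    apply: le_trans (_ : KF * (m%:R * del) <= _).
      rewrite ler_wpM2l ?Kmx_ge0 //; apply: le_trans hD _.
      by rewrite ler_wpM2l // ltW.
    rewrite mulrA -/Q.
    apply: le_trans (_ : (Q + 1) * del <= _).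
      by rewrite ler_wpM2r ?ltW //; lra.
    rewrite /del le_eqVlt; apply/orP; left; apply/eqP; field.
    have : 0 < Q + 1 by rewrite ltr_wpDl.
    lra.
  have hPt : P / t <= eta * Vth / 2.
    rewrite ler_pdivrMr //.
    move: h2; rewrite /M1 ler_pdivrMr ?mulr_gt0 // => h2.
    lra.
  rewrite /eps.
  apply: le_trans (_ : Vth^-1 * (eta * Vth) <= _).
    by rewrite ler_wpM2l //; lra.
  rewrite le_eqVlt; apply/orP; left; apply/eqP; field; lra.
apply/cvgrPdist_lt => eps0 eps00.
have g1' : 0 < 1 - g by rewrite subr_gt0.
set eta := eps0 * (1 - g) / 4.
have eta0 : 0 < eta by rewrite divr_gt0 ?mulr_gt0.
have [S [hS hSe]] := evb eta eta0.
have S0 : 0 < S by apply: lt_le_trans hdt hS.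
set M := \sum_i (N i (S + dt))%:R / S + vnorm2 astar.
have M0 : 0 <= M by rewrite addr_ge0 ?vnorm2_ge0 // sumr_ge0 // => i _; rewrite divr_ge0 // ltW.
have hM : forall t, S <= t -> t <= S + dt -> e t <= M.
  move=> t h1 h2.
  have t0 : 0 < t by apply: lt_le_trans S0 h1.
  apply: le_trans (vnorm2DB _ _) _.
  rewrite /M lerD2r; apply: le_trans (vnorm2_le_sum _) _.
  apply: ler_sum => i _; rewrite /a /rate mxE ger0_norm; last by rewrite divr_ge0 // ltW.
  apply: le_trans (_ : (N i (S + dt))%:R / t <= _).
    apply: ler_wpM2r; first by rewrite invr_ge0 ltW.
    by rewrite ler_nat hNmono.
  by rewrite ler_wpM2l // lef_pV2 ?posrE.
have hrec : forall t, S + dt <= t -> e t <= g * e (t - dt) + eta.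
  move=> t ht.
  have h1 : dt <= t by lra.
  apply: le_trans (rec t h1) _; rewrite lerD2l; apply: hSe; lra.
have D := decay g0 g1 hdt (ltW eta0) M0 hrec hM.
set B := M + eta / (1 - g).
have B0 : 0 <= B by rewrite addr_ge0 // divr_ge0 // ltW.
have del0 : 0 < eps0 / 2 / (B + 1) by rewrite !divr_gt0 // ltr_wpDl.
have : `|g| < 1 by rewrite ger0_norm.
move=> /cvg_expr /cvgrPdist_lt /(_ _ del0) [K _ HK].
have hK := HK K (leqnn K).
rewrite /= sub0r normrN ger0_norm ?exprn_ge0 // ltr_pdivlMr ?ltr_wpDl // in hK.
have gB : g ^+ K * B <= g ^+ K * (B + 1) by rewrite ler_wpM2l ?exprn_ge0 // lerDl.
have etaE : eta / (1 - g) = eps0 / 4 by rewrite /eta; field; lra.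
exists (S + K%:R * dt); split; first by rewrite num_real.
move=> t ht.
apply: le_lt_trans (norm_le_vnorm2 _) _.
rewrite vnorm2B.
have := D K t (ltW ht); rewrite -/B etaE => hD.
rewrite /e in hD; lra.
Qed.
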